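(* Let $H$ be a finite-dimensional Hopf algebra over a field $k$, $R\subseteq H$ a Hopf subalgebra, $Q=H/R^+H$, and let $\ell_Q$ be the stage at which the descending chain of annihilator ideals $\mathrm{Ann}\,Q\supseteq\mathrm{Ann}\,Q^{\otimes 2}\supseteq\cdots$ stabilizes. Then $\sigma[Q^{\otimes \ell_Q}]=\sigma[Q^{\otimes(\ell_Q+n)}]$ for all $n\in\mathbb{N}$.
   Context: $R^+=\ker\varepsilon\cap R$ and $Q=H/R^+H$ is a right $H$-module. $Q^{\otimes n}$ denotes the $n$-fold tensor power in mod-$H$ (tensor over $k$ with diagonal action $(m\otimes n)h=mh_{(1)}\otimes nh_{(2)}$). $\mathrm{Ann}\,M=\{h\in H:Mh=0\}$. $\ell_Q$ is the least $n\ge1$ with $\mathrm{Ann}\,Q^{\otimes n}=\mathrm{Ann}\,Q^{\otimes m}$ for all $m\ge n$. For a module $M$ over a finite-dimensional algebra $C$, $\sigma[M]$ is the full subcategory of mod-$C$ whose objects are submodules of quotients of finite direct sums of copies of $M$. *)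

(* Defs.v *)
(* Finite-dimensional Hopf algebras, encoded as a finite-dimensional
   k-algebra H (falgType) with comultiplication given in coordinates w.r.t. the
   canonical basis (vbasis fullv) of H: an element of H (x) H is a dim H x dim H
   matrix T, standing for \sum_{a,b} T a b e_a (x) e_b. *)
From HB Require Import structures.
From mathcomp Require Import all_boot all_order all_algebra all_field.
From mathcomp Require Import mxtens.
Set Implicit Arguments. Unset Strict Implicit. Unset Printing Implicit Defensive.
Import Order.TTheory GRing.Theory Num.Theory.
Local Open Scope ring_scope.

Section Hopf.
Variables (k : fieldType) (H : falgType k).

Definition dimH : nat := \dim (fullv : {vspace H}).
Definition hb (i : 'I_dimH) : H := tnth (vbasis (fullv : {vspace H})) i.
Definition hc (i : 'I_dimH) (x : H) : k := coord (vbasis (fullv : {vspace H})) i x.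

Definition tens (x y : H) : 'M[k]_dimH := \matrix_(a, b) (hc a x * hc b y).
Definition mulT (X Y : 'M[k]_dimH) : 'M[k]_dimH :=
  \sum_(a < dimH) \sum_(b < dimH) \sum_(c < dimH) \sum_(d < dimH)
     (X a b * Y c d) *: tens (hb a * hb c) (hb b * hb d).

Record is_hopf (Delta : H -> 'M[k]_dimH) (eps : H -> k) (S : H -> H) : Prop := {
  hopf_Delta_lin : linear Delta;
  hopf_eps_lin : forall (a : k) (x y : H), eps (a *: x + y) = a * eps x + eps y;
  hopf_S_lin : linear S;
  hopf_coassoc : forall (h : H) (c d b : 'I_dimH),
     \sum_(a < dimH) Delta h a b * Delta (hb a) c d
   = \sum_(a < dimH) Delta h c a * Delta (hb a) d b;
  hopf_counit_l : forall h : H,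
     \sum_(a < dimH) \sum_(b < dimH) (Delta h a b * eps (hb a)) *: hb b = h;
  hopf_counit_r : forall h : H,
     \sum_(a < dimH) \sum_(b < dimH) (Delta h a b * eps (hb b)) *: hb a = h;
  hopf_Delta_mul : forall x y : H, Delta (x * y) = mulT (Delta x) (Delta y);
  hopf_Delta_1 : Delta 1 = tens 1 1;
  hopf_eps_mul : forall x y : H, eps (x * y) = eps x * eps y;
  hopf_eps_1 : eps 1 = 1;
  hopf_antipode_l : forall h : H,
     \sum_(a < dimH) \sum_(b < dimH) Delta h a b *: (S (hb a) * hb b) = eps h *: 1;
  hopf_antipode_r : forall h : H,
     \sum_(a < dimH) \sum_(b < dimH) Delta h a b *: (hb a * S (hb b)) = eps h *: 1
}.

Definition is_hopf_subalg (Delta : H -> 'M[k]_dimH) (S : H -> H)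
    (R : {vspace H}) : Prop :=
  [/\ 1 \in R,
      (forall x y, x \in R -> y \in R -> x * y \in R),
      (forall x, x \in R -> exists C : 'M[k]_(\dim R),
          Delta x = \sum_(i < \dim R) \sum_(j < \dim R)
                      C i j *: tens (tnth (vbasis R) i) (tnth (vbasis R) j))
    & (forall x, x \in R -> S x \in R)].

Definition in_RplusH (eps : H -> k) (R : {vspace H}) (h : H) : Prop :=
  exists (m : nat) (r s : 'I_m -> H),
    (forall i, r i \in R /\ eps (r i) = 0) /\ h = \sum_(i < m) r i * s i.

(* a right H-module structure on row vectors k^m: v . h = v *m rho h *)
Definition is_rmod (m : nat) (rho : H -> 'M[k]_m) : Prop :=
  [/\ linear rho, rho 1 = 1%:M & forall x y, rho (x * y) = rho x *m rho y].

Definition tens_rmod (Delta : H -> 'M[k]_dimH) (m p : nat)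
   (rhoV : H -> 'M[k]_m) (rhoW : H -> 'M[k]_p) (h : H) : 'M[k]_(m * p) :=
  \sum_(a < dimH) \sum_(b < dimH) Delta h a b *: tensmx (rhoV (hb a)) (rhoW (hb b)).

Fixpoint tpow (Delta : H -> 'M[k]_dimH) (eps : H -> k) (q : nat)
    (rho : H -> 'M[k]_q) (n : nat) : H -> 'M[k]_(q ^ n) :=
  match n return H -> 'M[k]_(q ^ n) with
  | 0 => fun h => (eps h)%:M
  | n'.+1 => fun h => castmx (esym (expnS q n'), esym (expnS q n'))
                 (tens_rmod Delta rho (tpow Delta eps rho n') h)
  end.

Definition same_ann (m p : nat) (rho1 : H -> 'M[k]_m) (rho2 : H -> 'M[k]_p) : Prop :=
  forall h : H, rho1 h = 0 <-> rho2 h = 0.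

Definition dsum_rmod (m : nat) (rho : H -> 'M[k]_m) (r : nat) (h : H) : 'M[k]_(r * m) :=
  tensmx (1%:M : 'M[k]_r) (rho h).

Definition is_submod (m : nat) (rho : H -> 'M[k]_m) (X : 'M[k]_m) : Prop :=
  forall h : H, (X *m rho h <= X)%MS.

(* N belongs to sigma[M]: N is isomorphic to X / Y for submodules Y <= X of M^r,
   the isomorphism X/Y ~ N being induced by the linear map F restricted to X *)
Definition in_sigma (m : nat) (rhoM : H -> 'M[k]_m) (p : nat) (rhoN : H -> 'M[k]_p)
  : Prop :=
  exists (r : nat) (X Y : 'M[k]_(r * m)) (F : 'M[k]_(r * m, p)),
    [/\ is_submod (dsum_rmod rhoM r) X /\ is_submod (dsum_rmod rhoM r) Y,
        (Y <= X)%MS,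
        (forall v : 'rV[k]_(r * m), (v <= X)%MS ->
            (v *m F == 0 <-> (v <= Y)%MS)),
        (1%:M <= X *m F)%MS
      & (forall (v : 'rV[k]_(r * m)) (h : H), (v <= X)%MS ->
            v *m dsum_rmod rhoM r h *m F = v *m F *m rhoN h)].

Definition same_sigma (m1 m2 : nat) (rho1 : H -> 'M[k]_m1) (rho2 : H -> 'M[k]_m2)
  : Prop :=
  forall (p : nat) (rhoN : H -> 'M[k]_p), is_rmod rhoN ->
    (in_sigma rho1 rhoN <-> in_sigma rho2 rhoN).

End Hopf.

(* Main.v *)
Require Import Defs.
From HB Require Import structures.
From mathcomp Require Import all_boot all_order all_algebra all_field.
From mathcomp Require Import mxtens.
From mathcomp Require Import ring.
Import GRing.Theory.
Set Implicit Arguments. Unset Strict Implicit. Unset Printing Implicit Defensive.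
Local Open Scope ring_scope.

Section Gen.
Variables (k : fieldType) (H : falgType k).

Lemma hexp (u : H) : u = \sum_(a < dimH H) hc a u *: hb a.
Proof.
rewrite {1}(coord_vbasis (memvf u)); apply: eq_bigr => a _.
by rewrite /hb /hc (tnth_nth 0).
Qed.

Lemma lin_sumZ (V : lmodType k) (f : H -> V)
  (hf : forall a u v, f (a *: u + v) = a *: f u + f v) (n : nat)
  (c : 'I_n -> k) (z : 'I_n -> H) :
  f (\sum_(i < n) c i *: z i) = \sum_(i < n) c i *: f (z i).
Proof.
have f0 : f 0 = 0.
  by have := hf (-1) 0 0; rewrite scaler0 addr0 scaleN1r addNr.
elim/big_rec2: _ => [//|i y1 y2 _ <-]; by rewrite hf.
Qed.

Lemma lin_expand (V : lmodType k) (f : H -> V)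
  (hf : forall a u v, f (a *: u + v) = a *: f u + f v) (u : H) :
  f u = \sum_(a < dimH H) hc a u *: f (hb a).
Proof. by rewrite {1}(hexp u) (lin_sumZ hf). Qed.

Lemma sum_pair (V : nmodType) (p d : nat) (G : 'I_(p * d) -> V) :
  \sum_(i < p * d) G i = \sum_(j < p) \sum_(a < d) G (mxtens_index (j, a)).
Proof.
rewrite pair_big; apply: reindex => //=.
exists (@mxtens_unindex p d) => i _.
  by case: i => a b; rewrite mxtens_indexK.
by case: (mxtens_unindex i) (mxtens_unindexK i) => a b.
Qed.

End Gen.

Section Sig.
Variables (k : fieldType) (H : falgType k).
Variables (m p : nat) (rho : H -> 'M[k]_m) (rhoN : H -> 'M[k]_p).
Hypotheses (hrho : is_rmod rho) (hN : is_rmod rhoN)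
  (ann : forall h, rho h = 0 -> rhoN h = 0).

Local Notation r := (p * m)%N.
Local Notation d := (dimH H).

Definition xv (j : 'I_p) (y : H) : 'rV[k]_(r * m) :=
  \sum_(t < m) tensmx (delta_mx 0 (mxtens_index (j, t)) : 'rV[k]_r) (row t (rho y)).

Lemma rho_lin a u v : rho (a *: u + v) = a *: rho u + rho v.
Proof. by case: hrho => hl _ _; apply: hl. Qed.
Lemma rhoN_lin a u v : rhoN (a *: u + v) = a *: rhoN u + rhoN v.
Proof. by case: hN => hl _ _; apply: hl. Qed.

Lemma xv_lin j a u v : xv j (a *: u + v) = a *: xv j u + xv j v.
Proof.
apply/matrixP => i c; rewrite !mxE !summxE big_distrr -big_split /=.
apply: eq_bigr => t _; rewrite !mxE rho_lin !mxE; ring.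
Qed.

Lemma xv_mul j y g : xv j y *m dsum_rmod rho r g = xv j (y * g).
Proof.
rewrite /xv /dsum_rmod mulmx_suml; apply: eq_bigr => t _.
case: hrho => _ _ hm.
have E := @tensmx_mul k 1 r 1 m r m (delta_mx 0 (mxtens_index (j,t))) (row t (rho y)) 1%:M (rho g).
rewrite mulmx1 -row_mul -hm in E; exact: E.
Qed.

Lemma xv_entry (y : 'I_p -> H) j t s :
  (\sum_(j' < p) xv j' (y j')) 0 (mxtens_index (mxtens_index (j, t), s))
  = rho (y j) t s.
Proof.
have o1 : forall z : 'I_1, (z == 0) = true by move=> z; rewrite (ord1 z).
rewrite summxE (bigD1 j) //= big1 ?addr0.
  rewrite /xv summxE (bigD1 t) //= big1 ?addr0.
    by rewrite !mxE mxtens_indexK /= eqxx mul1r.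
  move=> t' ht'; rewrite !mxE mxtens_indexK /=.
  rewrite (inj_eq (can_inj (@mxtens_indexK _ _))) xpair_eqE eqxx /=.
  by rewrite eq_sym (negbTE ht') mul0r.
move=> j' hj'; rewrite /xv summxE big1 // => t' _.
rewrite !mxE mxtens_indexK /=.
by rewrite (inj_eq (can_inj (@mxtens_indexK _ _))) xpair_eqE eq_sym (negbTE hj') /= mul0r.
Qed.


Local Notation ej j := (delta_mx 0 j : 'rV[k]_p).

Definition Pm : 'M[k]_(p * d, r * m) :=
  \matrix_(i, c) xv (mxtens_unindex i).1 (hb (mxtens_unindex i).2) 0 c.
Definition Psi : 'M[k]_(p * d, p) :=
  \matrix_(i, c) (ej (mxtens_unindex i).1 *m rhoN (hb (mxtens_unindex i).2)) 0 c.

Lemma row_Pm j a : row (mxtens_index (j, a)) Pm = xv j (hb a).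
Proof. by apply/rowP => c; rewrite !mxE mxtens_indexK. Qed.
Lemma row_Psi j a : row (mxtens_index (j, a)) Psi = ej j *m rhoN (hb a).
Proof. by apply/rowP => c; rewrite !mxE mxtens_indexK. Qed.

Definition ys (u : 'rV[k]_(p * d)) (j : 'I_p) : H :=
  \sum_(a < d) u 0 (mxtens_index (j, a)) *: hb a.

Lemma uPm (u : 'rV[k]_(p * d)) : u *m Pm = \sum_(j < p) xv j (ys u j).
Proof.
rewrite mulmx_sum_row sum_pair; apply: eq_bigr => j _.
rewrite /ys (lin_sumZ (@xv_lin j)); apply: eq_bigr => a _.
by rewrite row_Pm.
Qed.

Lemma uPsi (u : 'rV[k]_(p * d)) : u *m Psi = \sum_(j < p) ej j *m rhoN (ys u j).
Proof.
rewrite mulmx_sum_row sum_pair; apply: eq_bigr => j _.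
have hl : forall a (v w : H), ej j *m rhoN (a *: v + w)
   = a *: (ej j *m rhoN v) + ej j *m rhoN w.
  by move=> a v w; rewrite rhoN_lin mulmxDr scalemxAr.
rewrite /ys (lin_sumZ hl); apply: eq_bigr => a _.
by rewrite row_Psi.
Qed.

Lemma kerP (u : 'rV[k]_(p * d)) : u *m Pm = 0 -> u *m Psi = 0.
Proof.
rewrite uPm uPsi => h0; apply: big1 => j _.
suff -> : rhoN (ys u j) = 0 by rewrite mulmx0.
apply: ann; apply/matrixP => t s.
by rewrite -(xv_entry (ys u)) h0 !mxE.
Qed.

Definition Fm : 'M[k]_(r * m, p) := pinvmx Pm *m Psi.

Lemma PF (w : 'rV[k]_(p * d)) : w *m Pm *m Fm = w *m Psi.
Proof.
have h : (w *m Pm *m pinvmx Pm - w) *m Pm = 0.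
  by rewrite mulmxBl mulmxKpV ?submxMl // subrr.
have := kerP h; rewrite mulmxBl => /eqP; rewrite subr_eq0 => /eqP <-.
by rewrite /Fm !mulmxA.
Qed.


Lemma xv_sub j y : (xv j y <= Pm)%MS.
Proof.
rewrite (lin_expand (@xv_lin j) y); apply: summx_sub => a _.
by apply: scalemx_sub; rewrite -row_Pm row_sub.
Qed.

Lemma xvF j y : xv j y *m Fm = ej j *m rhoN y.
Proof.
have hl1 : forall a (v w : H), xv j (a *: v + w) *m Fm
   = a *: (xv j v *m Fm) + xv j w *m Fm.
  by move=> a v w; rewrite xv_lin mulmxDl scalemxAl.
have hl2 : forall a (v w : H), ej j *m rhoN (a *: v + w)
   = a *: (ej j *m rhoN v) + ej j *m rhoN w.
  by move=> a v w; rewrite rhoN_lin mulmxDr scalemxAr.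
rewrite (lin_expand hl1) (lin_expand hl2); apply: eq_bigr => a _.
by rewrite -row_Pm -row_Psi !rowE PF.
Qed.

Lemma inter (v : 'rV[k]_(r * m)) h : (v <= Pm)%MS ->
  v *m dsum_rmod rho r h *m Fm = v *m Fm *m rhoN h.
Proof.
move=> /mulmxKpV <-; set w := v *m pinvmx Pm.
rewrite [w *m Pm]mulmx_sum_row sum_pair !mulmx_suml; apply: eq_bigr => j _.
rewrite ?mulmx_suml; apply: eq_bigr; move=> a _.
case: hN => _ _ hm.
rewrite row_Pm -!scalemxAl xv_mul !xvF hm mulmxA.
by [].
Qed.

Lemma sigma_of_ann : in_sigma rho rhoN.
Proof.
set X := (<<Pm>>%MS : 'M[k]_(r * m)).
set Y := ((X :&: kermx Fm)%MS : 'M[k]_(r * m)).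
have sX : forall v : 'rV[k]_(r * m), (v <= X)%MS = (v <= Pm)%MS.
  by move=> v; rewrite /X genmxE.
have subX : is_submod (dsum_rmod rho r) X.
  move=> h; rewrite /X (eqmxMr _ (genmxE Pm)) genmxE.
  apply/row_subP => i; rewrite row_mul.
  case: (mxtens_indexP i) => j a.
  by rewrite row_Pm xv_mul xv_sub.
have subY : is_submod (dsum_rmod rho r) Y.
  move=> h; apply/row_subP => i; rewrite row_mul.
  have := row_sub i Y; rewrite sub_capmx sub_kermx => /andP [hX hK].
  rewrite sub_capmx sub_kermx; apply/andP; split.
    by rewrite sX; move: (subX h); rewrite /is_submod => sXX;
       rewrite -sX; apply: submx_trans sXX; apply: submxMr.
  by rewrite inter -?sX // (eqP hK) mul0mx.
exists r, X, Y, Fm; split.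
- by [].
- exact: capmxSl.
- by move=> v hv; rewrite sub_capmx hv sub_kermx.
- apply/row_subP => j; rewrite row1.
  have -> : (delta_mx 0 j : 'rV[k]_p) = xv j 1 *m Fm.
    by rewrite xvF; case: hN => _ -> _; rewrite mulmx1.
  by apply: submxMr; rewrite sX xv_sub.
- by move=> v h hv; rewrite inter -?sX.
Qed.

End Sig.

Section Sig2.
Variables (k : fieldType) (H : falgType k).

Lemma ann_of_sigma (m p : nat) (rhoM : H -> 'M[k]_m) (rhoN : H -> 'M[k]_p) :
  in_sigma rhoM rhoN -> forall h, rhoM h = 0 -> rhoN h = 0.
Proof.
move=> [r [X [Y [F [[sX _] _ _ full inter]]]]] h h0.
have D0 : dsum_rmod rhoM r h = 0 by rewrite /dsum_rmod h0 tensmx0.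
apply/row_matrixP => j; rewrite row0 rowE.
have := row_sub j (1%:M : 'M[k]_p); rewrite row1 => hj.
have /submxP [D ->] := submx_trans hj full.
rewrite !mulmxA.
rewrite -inter; last by rewrite submxMl.
by rewrite D0 mulmx0 mul0mx.
Qed.

Lemma sigma_eq (m1 m2 : nat) (rho1 : H -> 'M[k]_m1) (rho2 : H -> 'M[k]_m2) :
  is_rmod rho1 -> is_rmod rho2 -> same_ann rho1 rho2 -> same_sigma rho1 rho2.
Proof.
move=> h1 h2 hs p rhoN hN; split => hsig.
  apply: sigma_of_ann => // h /hs; exact: ann_of_sigma hsig h.
apply: sigma_of_ann => // h /hs; exact: ann_of_sigma hsig h.
Qed.

End Sig2.

Section PartB.
Variables (k : fieldType) (H : falgType k).
Local Notation d := (dimH H).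

Lemma castmx_lin a b (e : a = b) (c : k) (M N : 'M[k]_a) :
  castmx (e, e) (c *: M + N) = c *: castmx (e, e) M + castmx (e, e) N.
Proof. by case: b / e; rewrite !castmx_id. Qed.
Lemma castmx_1 a b (e : a = b) : castmx (e, e) (1%:M : 'M[k]_a) = 1%:M.
Proof. by case: b / e; rewrite castmx_id. Qed.
Lemma castmx_mulmx a b (e : a = b) (M N : 'M[k]_a) :
  castmx (e, e) (M *m N) = castmx (e, e) M *m castmx (e, e) N.
Proof. by case: b / e; rewrite !castmx_id. Qed.

Lemma tens_bilin m1 n1 m2 n2 (n n' : nat) (c : 'I_n -> k) (e : 'I_n' -> k)
   (A : 'I_n -> 'M[k]_(m1, n1)) (B : 'I_n' -> 'M[k]_(m2, n2)) :
  tensmx (\sum_(a < n) c a *: A a) (\sum_(b < n') e b *: B b)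
  = \sum_(a < n) \sum_(b < n') (c a * e b) *: tensmx (A a) (B b).
Proof.
apply/matrixP => i j; rewrite !mxE !summxE mulr_suml; apply: eq_bigr => a _.
rewrite !summxE mulr_sumr; apply: eq_bigr => b _.
rewrite !mxE; ring.
Qed.

Lemma tensmx11 m n : tensmx (1%:M : 'M[k]_m) (1%:M : 'M[k]_n) = 1%:M.
Proof.
apply/matrixP => i j.
case: (mxtens_indexP i) => i1 i2; case: (mxtens_indexP j) => j1 j2.
rewrite tensmxE !mxE (inj_eq (can_inj (@mxtens_indexK _ _))) xpair_eqE.
by case: (i1 == j1); case: (i2 == j2); rewrite /= ?mul1r ?mul0r.
Qed.

Variables (m n : nat) (rhoV : H -> 'M[k]_m) (rhoW : H -> 'M[k]_n).
Hypotheses (hV : is_rmod rhoV) (hW : is_rmod rhoW).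

Definition Gm (M : 'M[k]_d) : 'M[k]_(m * n) :=
  \sum_(a < d) \sum_(b < d) M a b *: tensmx (rhoV (hb a)) (rhoW (hb b)).

Lemma Gm_tens u w : Gm (tens u w) = tensmx (rhoV u) (rhoW w).
Proof.
have lV : forall a (x y : H), rhoV (a *: x + y) = a *: rhoV x + rhoV y.
  by case: hV => hl _ _; apply: hl.
have lW : forall a (x y : H), rhoW (a *: x + y) = a *: rhoW x + rhoW y.
  by case: hW => hl _ _; apply: hl.
rewrite (lin_expand lV u) (lin_expand lW w) tens_bilin.
by apply: eq_bigr => a _; apply: eq_bigr => b _; rewrite mxE.
Qed.

Lemma GmD M N : Gm (M + N) = Gm M + Gm N.
Proof.
rewrite /Gm -big_split; apply: eq_bigr => a _.
rewrite -big_split; apply: eq_bigr => b _; by rewrite mxE scalerDl.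
Qed.
Lemma Gm0 : Gm 0 = 0.
Proof.
rewrite /Gm big1 // => a _; rewrite big1 // => b _; by rewrite mxE scale0r.
Qed.
Lemma GmZ c M : Gm (c *: M) = c *: Gm M.
Proof.
rewrite /Gm scaler_sumr; apply: eq_bigr => a _.
rewrite scaler_sumr; apply: eq_bigr => b _; by rewrite mxE scalerA.
Qed.

Lemma Gm_sum I (r : seq I) (P : pred I) (F : I -> 'M[k]_d) :
  Gm (\sum_(i <- r | P i) F i) = \sum_(i <- r | P i) Gm (F i).
Proof. exact: (big_morph Gm GmD Gm0). Qed.

Lemma Tmul u u' w w' :
  tensmx (rhoV (u * u')) (rhoW (w * w'))
  = tensmx (rhoV u) (rhoW w) *m tensmx (rhoV u') (rhoW w').
Proof.
case: hV => _ _ ->; case: hW => _ _ ->.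
by rewrite (@tensmx_mul k).
Qed.

Lemma Gm_mulT X Y : Gm (mulT X Y) = Gm X *m Gm Y.
Proof.
rewrite /mulT (big_morph Gm GmD Gm0) {2}/Gm mulmx_suml; apply: eq_bigr => a _.
rewrite (big_morph Gm GmD Gm0) mulmx_suml; apply: eq_bigr => b _.
rewrite -scalemxAl {2}/Gm mulmx_sumr scaler_sumr (big_morph Gm GmD Gm0).
apply: eq_bigr => c _.
rewrite (big_morph Gm GmD Gm0) mulmx_sumr scaler_sumr; apply: eq_bigr => e _.
by rewrite GmZ Gm_tens Tmul -scalemxAr scalerA.
Qed.

End PartB.

Section Tpow.
Variables (k : fieldType) (H : falgType k).
Variables (Delta : H -> 'M[k]_(dimH H)) (eps : H -> k) (S : H -> H).
Hypothesis hH : is_hopf Delta eps S.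
Variables (q : nat) (rhoQ : H -> 'M[k]_q).
Hypothesis hQ : is_rmod rhoQ.

Lemma tpowS n h : tpow Delta eps rhoQ n.+1 h =
  castmx (esym (expnS q n), esym (expnS q n))
    (Gm rhoQ (tpow Delta eps rhoQ n) (Delta h)).
Proof. by []. Qed.

Lemma tpow_rmod n : is_rmod (tpow Delta eps rhoQ n).
Proof.
case: hH => Dl el _ _ _ _ Dm D1 em e1 _ _.
elim: n => [|n [IHl IH1 IHm]].
  split => /=.
  - by move=> a u v; rewrite el raddfD /= scale_scalar_mx.
  - by rewrite e1.
  - by move=> x y; rewrite em scalar_mxM.
split.
- move=> a u v; rewrite !tpowS -castmx_lin; congr castmx.
  rewrite Dl GmD GmZ //.
- rewrite tpowS D1 Gm_tens //; case: hQ => _ -> _; rewrite IH1 tensmx11.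
  exact: castmx_1.
- move=> x y; rewrite !tpowS -castmx_mulmx Dm Gm_mulT //.
Qed.

End Tpow.

Unset Implicit Arguments.
Set Strict Implicit.

Theorem mainTheorem12
  (k : fieldType) (H : falgType k)
  (Delta : H -> 'M[k]_(dimH H)) (eps : H -> k) (S : H -> H)
  (hH : is_hopf Delta eps S)
  (R : {vspace H}) (hR : is_hopf_subalg Delta S R)
  (* Q = H / R^+ H, given as a right H-module on k^q with the projection pi *)
  (q : nat) (rhoQ : H -> 'M[k]_q) (hQ : is_rmod rhoQ)
  (pi : H -> 'rV[k]_q) (pi_lin : linear pi)
  (pi_hom : forall x h : H, pi (x * h) = pi x *m rhoQ h)
  (pi_surj : forall v : 'rV[k]_q, exists h : H, pi h = v)
  (pi_ker : forall h : H, pi h = 0 <-> in_RplusH eps R h)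
  (* l = l_Q: the least l >= 1 from which Ann Q^{(x) m} is constant *)
  (l : nat) (l_ge1 : (1 <= l)%N)
  (l_stab : forall m : nat, (l <= m)%N ->
     same_ann (tpow Delta eps rhoQ l) (tpow Delta eps rhoQ m))
  (l_min : forall n : nat, (1 <= n)%N ->
     (forall m : nat, (n <= m)%N ->
        same_ann (tpow Delta eps rhoQ n) (tpow Delta eps rhoQ m)) ->
     (l <= n)%N) :
  forall n : nat,
    same_sigma (tpow Delta eps rhoQ l) (tpow Delta eps rhoQ (l + n)).
Proof.
move=> n; apply: sigma_eq; try exact: (tpow_rmod hH hQ).
exact: l_stab (leq_addr n l).
Qed.
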